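(* Let $n\ge1$ and let $f\in\mathcal{G}_1$ be $n$-ary, $f=2x_1\cdots x_n\left(\sum_{i=1}^n a_ix_i^2+\sum_{i=1}^n b_ix_i+c\right)$. (i) If $a_i=1$ for some $i$, then $4r_k\in C(f)$ for every $1\le k\le n+2$. (ii) If $b_i=1$ for some $i$, then $4r_k\in C(f)$ for every $1\le k\le n+1$.
   Context: All operations are on $\mathbb{Z}_8$. $\mathcal{G}_1$ is the set of all operations (of any arity $n\ge1$) of the form $2x_1\cdots x_n\left(\sum_{i=1}^n a_ix_i^2+\sum_{i=1}^n b_ix_i+c\right)$ with $a_i,b_i\in\{0,1\}$ and $c\in\{0,1,2,3\}$. For an operation $f$, $C(f)$ denotes the clone on $\mathbb{Z}_8$ generated by $f$ together with binary addition and all unary constant operations. $r_k=x_1x_2\cdots x_k$. *)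

(* Defs.v *)
From mathcomp Require Import all_boot all_algebra.
Set Implicit Arguments. Unset Strict Implicit. Unset Printing Implicit Defensive.
Import GRing.Theory.
Local Open Scope ring_scope.

Definition Z8 := 'Z_8.

Definition op (m : nat) := ('I_m -> Z8) -> Z8.

(* C(f): the clone on Z_8 generated by the n0-ary operation f, binary addition
   and all unary constant operations.  [clone_of f m g] means that the m-ary
   operation g belongs to C(f). *)
Inductive clone_of (n0 : nat) (f : op n0) : forall m, op m -> Prop :=
| cl_proj m (i : 'I_m) : clone_of f (fun x => x i)
| cl_gen : clone_of f f
| cl_add : clone_of f (fun x : 'I_2 -> Z8 => x ord0 + x (lift ord0 ord0))
| cl_const (c : Z8) : clone_of f (fun _ : 'I_1 -> Z8 => c)
| cl_comp m k (g : op m) (h : 'I_m -> op k) :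
    clone_of f g -> (forall j, clone_of f (h j)) ->
    clone_of f (fun x => g (fun j => h j x))
| cl_ext m (g g' : op m) : clone_of f g -> (forall x, g' x = g x) -> clone_of f g'.

Definition G1op (n : nat) (a b : 'I_n -> bool) (c : 'I_4) : op n :=
  fun x => 2 * (\prod_(i < n) x i) *
           (\sum_(i < n) (a i)%:R * x i ^+ 2 + \sum_(i < n) (b i)%:R * x i + (c : nat)%:R).

Definition four_r (k : nat) : op k := fun x => 4 * \prod_(i < k) x i.
Arguments four_r : clear implicits.

(* Main.v *)
Require Import Defs.
From mathcomp Require Import all_boot all_algebra ring.
Import GRing.Theory.
Set Implicit Arguments. Unset Strict Implicit.
Local Open Scope ring_scope.

Section Cl.
Variables (n0 : nat) (f : op n0).

Lemma cl_addop k (g1 g2 : op k) : clone_of f g1 -> clone_of f g2 ->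
  clone_of f (fun x => g1 x + g2 x).
Proof.
move=> h1 h2.
pose h : 'I_2 -> op k := fun j => if (j : nat) == 0%N then g1 else g2.
have hh : forall j, clone_of f (h j) by move=> j; rewrite /h; case: ifP.
by apply: (cl_ext (cl_comp (cl_add f) hh)).
Qed.

Lemma cl_muln k (g : op k) m : clone_of f g -> clone_of f (fun x => g x *+ m.+1).
Proof.
move=> hg; elim: m => [|m IH]; first by apply: (cl_ext hg).
apply: (cl_ext (cl_addop IH hg)) => x; by rewrite mulrS addrC.
Qed.

Lemma cl_opp k (g : op k) : clone_of f g -> clone_of f (fun x => - g x).
Proof.
move=> hg; apply: (cl_ext (cl_muln 6 hg)) => x.
have h8 : g x *+ 8 = 0.
  have e8 : (8%:R : Z8) = 0 by apply/eqP.
  by rewrite -mulr_natr e8 mulr0.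
by rewrite -[LHS]add0r -h8 mulrSr addrK.
Qed.

Lemma cl_cst k (c : Z8) : clone_of f (fun _ : 'I_k.+1 -> Z8 => c).
Proof.
have hh : forall j : 'I_1, clone_of f (fun y : 'I_k.+1 -> Z8 => y ord0) by move=> _; exact: cl_proj.
by apply: (cl_ext (cl_comp (cl_const f c) hh)).
Qed.

Lemma cl_down M k : (1 <= k <= M)%N -> clone_of f (four_r M) -> clone_of f (four_r k).
Proof.
case: k => [//|k] /= kM hM.
pose h : 'I_M -> op k.+1 := fun j x => if (j < k.+1)%N then x (inord j) else 1.
have hh : forall j, clone_of f (h j).
  move=> j; rewrite /h; case: (j < k.+1)%N; [exact: cl_proj | exact: cl_cst].
apply: (cl_ext (cl_comp hM hh)).
move=> x; rewrite /four_r /h; congr (_ * _).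
rewrite -big_mkcond /=.
transitivity (\prod_(i < k.+1) x (inord i)).
  by apply: eq_bigr => i _; rewrite inord_val.
exact: (big_ord_widen _ (fun j => x (inord j)) kM).
Qed.
End Cl.

Section Main.
Variables (n : nat) (a b : 'I_n -> bool) (c : 'I_4).

Lemma G1_split (i : 'I_n) (y : 'I_n -> Z8) t :
 G1op a b c (fun j => if j == i then t else y j) =
 2 * (t * \prod_(j < n | j != i) y j) * ((a i)%:R * t ^+ 2 + (b i)%:R * t +
   (\sum_(j < n | j != i) (a j)%:R * y j ^+ 2 + \sum_(j < n | j != i) (b j)%:R * y j + (c:nat)%:R)).
Proof.
rewrite /G1op (bigD1 i) //= (bigD1 i (P := xpredT)) //= (bigD1 i (P := xpredT)) //= eqxx.
have E (G : 'I_n -> Z8 -> Z8) : \sum_(j < n | j != i) G j (if j == i then t else y j) = \sum_(j<n | j != i) G j (y j).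
  by apply: eq_bigr => j /negbTE ->.
rewrite (E (fun j z => (a j)%:R * z ^+ 2)) (E (fun j z => (b j)%:R * z)).
congr (_ * _ * _); last by ring.
by congr (_ * _); apply: eq_bigr => j /negbTE ->.
Qed.

Lemma e8 : (8%:R : Z8) = 0. Proof. by apply/eqP. Qed.

Lemma caseA (i : 'I_n) : a i -> clone_of (G1op a b c) (four_r n.+2).
Proof.
move=> ha.
pose wd (j : 'I_n) : 'I_n.+2 := widen_ord (leqnSn n.+1) (widen_ord (leqnSn n) j).
pose vv : 'I_n.+2 := widen_ord (leqnSn n.+1) ord_max.
pose ww : 'I_n.+2 := ord_max.
pose F (T : op n.+2) : op n.+2 := fun x => G1op a b c (fun j => if j == i then T x else x (wd j)).
have clF : forall T, clone_of (G1op a b c) T -> clone_of (G1op a b c) (F T).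
  move=> T hT.
  have hh : forall j, clone_of (G1op a b c) (fun x => if j == i then T x else x (wd j)).
    by move=> j; case: (j == i); [exact: hT | exact: cl_proj].
  by apply: (cl_ext (cl_comp (cl_gen _) hh)).
pose u : op n.+2 := fun x => x (wd i).
pose v : op n.+2 := fun x => x vv.
pose w : op n.+2 := fun x => x ww.
have cu : clone_of (G1op a b c) u by exact: cl_proj.
have cv : clone_of (G1op a b c) v by exact: cl_proj.
have cw : clone_of (G1op a b c) w by exact: cl_proj.
have H : clone_of (G1op a b c) (fun x =>
   F (fun x => u x + v x + w x) x + - F (fun x => u x + v x) x + - F (fun x => u x + w x) x
   + - F (fun x => v x + w x) x + F u x + F v x + F w x).
  by repeat first [apply: cl_addop | apply: cl_opp | apply: clF | assumption].
apply: (cl_ext H) => x.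
rewrite /F !G1_split /four_r !big_ord_recr /= (bigD1 i) //= ha /u /v /w.
set Y := \prod_(j < n | j != i) _.
rewrite /wd /vv /ww.
have -> : (true%:R : Z8) = 1 by [].
have -> : (4 : Z8) = 12 - 8 by apply/eqP.
rewrite e8 subr0; ring.
Qed.

Lemma caseB (i : 'I_n) : ~~ a i -> b i -> clone_of (G1op a b c) (four_r n.+1).
Proof.
move=> ha hb.
pose wd (j : 'I_n) : 'I_n.+1 := widen_ord (leqnSn n) j.
pose ww : 'I_n.+1 := ord_max.
pose F (T : op n.+1) : op n.+1 := fun x => G1op a b c (fun j => if j == i then T x else x (wd j)).
have clF : forall T, clone_of (G1op a b c) T -> clone_of (G1op a b c) (F T).
  move=> T hT.
  have hh : forall j, clone_of (G1op a b c) (fun x => if j == i then T x else x (wd j)).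
    by move=> j; case: (j == i); [exact: hT | exact: cl_proj].
  by apply: (cl_ext (cl_comp (cl_gen _) hh)).
pose u : op n.+1 := fun x => x (wd i).
pose w : op n.+1 := fun x => x ww.
have cu : clone_of (G1op a b c) u by exact: cl_proj.
have cw : clone_of (G1op a b c) w by exact: cl_proj.
have H : clone_of (G1op a b c) (fun x =>
   F (fun x => u x + w x) x + - F u x + - F w x).
  by repeat first [apply: cl_addop | apply: cl_opp | apply: clF | assumption].
apply: (cl_ext H) => x.
rewrite /F !G1_split /four_r !big_ord_recr /= (bigD1 i) //= (negbTE ha) hb /u /w.
rewrite /wd /ww.
have -> : (true%:R : Z8) = 1 by [].
have -> : (false%:R : Z8) = 0 by [].
ring.
Qed.
End Main.

Theorem lemma4p1 (n : nat) (a b : 'I_n -> bool) (c : 'I_4) :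
  (1 <= n)%N ->
  ((exists i, a i) ->
     forall k, (1 <= k <= n + 2)%N -> clone_of (G1op a b c) (four_r k)) /\
  ((exists i, b i) ->
     forall k, (1 <= k <= n + 1)%N -> clone_of (G1op a b c) (four_r k)).
Proof.
move=> _.
have hA : (exists i, a i) -> forall k, (1 <= k <= n + 2)%N -> clone_of (G1op a b c) (four_r k).
  case=> i hi k hk; apply: (cl_down (M := n.+2)); last exact: caseA hi.
  by rewrite addn2 in hk.
split=> // -[i hi] k hk.
case: (boolP [exists j, a j]) => [/existsP ex | /existsPn nex].
  apply: hA => //; case/andP: hk => -> /= hk; by rewrite (leq_trans hk) // leq_add2l.
apply: (cl_down (M := n.+1)); last exact: caseB (nex i) hi.
by rewrite addn1 in hk.
Qed.
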